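(* Let $R$ be a commutative ring with unit, let $G$ be a group, let $Z$ be a $G$-set, and let $\mathcal A=\bigoplus_{z\in Z}\mathcal A_z$ be an $R$-linear category with $G$-action $\alpha$ such that for every $g\in G$ and $z\in Z$, $\alpha_g$ restricts to an isomorphism $\alpha_g\colon\mathcal A_z\to\mathcal A_{gz}$. Then there is an equivalence of $R$-linear categories \[\mathcal A\rtimes G\simeq\bigoplus_{[z]\in G\backslash Z}\mathcal A_z\rtimes G_z,\] where $G_z$ denotes the stabilizer of $z$ (and $z$ runs over a set of representatives of the orbits).
   Context: An $R$-linear category is a category enriched over $R$-modules. $\bigoplus_{z}\mathcal A_z$ denotes the coproduct of $R$-linear categories: the disjoint union of the object sets, with zero morphisms between objects of different summands. A $G$-action is given by $R$-linear functors $\alpha_g$ with $\alpha_1=\mathrm{id}$, $\alpha_g\alpha_h=\alpha_{gh}$. The crossed product $\mathcal C\rtimes G$ has the objects of $\mathcal C$, morphisms $A\to B$ finite formal sums $\sum_g f_g g$ with $f_g\in\mathrm{Hom}(\alpha_g(A),B)$, and composition determined by $(fg)\circ(f'g')=(f\circ\alpha_g(f'))gg'$; $\mathcal A_z\rtimes G_z$ uses the restricted action of $G_z$ on $\mathcal A_z$. *)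

(* Defs.v *)
From HB Require Import structures.
From mathcomp Require Import all_boot all_order all_algebra.
From mathcomp Require Import boolp classical_sets cardinality fsbigop.

Set Implicit Arguments.
Unset Strict Implicit.
Unset Printing Implicit Defensive.
Import GRing.Theory.
Local Open Scope ring_scope.

Definition hcast {O : Type} (H : O -> O -> Type) {X X' Y Y' : O}
  (e1 : X = X') (e2 : Y = Y') (f : H X Y) : H X' Y' :=
  match e2 in _ = Y2 return H X' Y2 with
  | erefl => match e1 in _ = X2 return H X2 Y with erefl => f end end.

Definition scast {O : Type} (H : O -> O -> Type) {X X' Y : O}
  (e : X = X') (f : H X Y) : H X' Y :=
  match e in _ = X2 return H X2 Y with erefl => f end.

Arguments hcast {O} H {X X' Y Y'}.
Arguments scast {O} H {X X' Y}.

Lemma sig_Prop_eq (T : Type) (P : T -> Prop) (x y : {t | P t}) :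
  proj1_sig x = proj1_sig y -> x = y.
Proof.
case: x => x px; case: y => y py /= exy; subst y.
by rewrite (Prop_irrelevance px py).
Qed.

Record lincat (R : comPzRingType) := LinCat {
  lobj : Type;
  lhom : lobj -> lobj -> lmodType R;
  lcomp : forall X Y W, lhom Y W -> lhom X Y -> lhom X W;
  idm : forall X, lhom X X }.
Arguments lcomp {R} _ {X Y W}.
Arguments idm {R} _ X.
Arguments lhom {R} _.

Definition is_lincat (R : comPzRingType) (C : lincat R) : Prop :=
  [/\ (forall X Y W (g1 g2 : lhom C Y W) (f : lhom C X Y),
          lcomp C (g1 + g2) f = lcomp C g1 f + lcomp C g2 f),
      (forall X Y W (g : lhom C Y W) (f1 f2 : lhom C X Y),
          lcomp C g (f1 + f2) = lcomp C g f1 + lcomp C g f2),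
      (forall X Y W (a : R) (g : lhom C Y W) (f : lhom C X Y),
          lcomp C (a *: g) f = a *: lcomp C g f /\ lcomp C g (a *: f) = a *: lcomp C g f),
      (forall X Y W V (h : lhom C W V) (g : lhom C Y W) (f : lhom C X Y),
          lcomp C h (lcomp C g f) = lcomp C (lcomp C h g) f)
    & (forall X Y (f : lhom C X Y), lcomp C (idm C Y) f = f /\ lcomp C f (idm C X) = f)].

(* Raw data of an R-linear category whose hom-sets are given by their
   R-module operations (used for the constructed categories: crossed
   products and coproducts; an equivalence only refers to these data). *)
Record lcat (R : comPzRingType) := LCat {
  cobj : Type;
  chom : cobj -> cobj -> Type;
  czero : forall X Y, chom X Y;
  cadd : forall X Y, chom X Y -> chom X Y -> chom X Y;
  cscale : forall X Y, R -> chom X Y -> chom X Y;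
  ccomp : forall X Y W, chom Y W -> chom X Y -> chom X W;
  cid : forall X, chom X X }.
Arguments czero {R} _ {X Y}.
Arguments cadd {R} _ {X Y}.
Arguments cscale {R} _ {X Y}.
Arguments ccomp {R} _ {X Y W}.
Arguments cid {R} _ X.
Arguments chom {R} _.

Definition lcat_of (R : comPzRingType) (C : lincat R) : lcat R :=
  @LCat R (lobj C) (lhom C) (fun X Y => 0) (fun X Y f g => f + g)
    (fun X Y a f => a *: f) (fun X Y W => @lcomp R C X Y W) (idm C).

Definition lcat_equiv (R : comPzRingType) (C D : lcat R) : Prop :=
  exists (F : cobj C -> cobj D)
         (Fh : forall X Y, chom C X Y -> chom D (F X) (F Y)),
  [/\ (forall X Y (f g : chom C X Y), Fh X Y (cadd C f g) = cadd D (Fh X Y f) (Fh X Y g)),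
      (forall X Y (a : R) (f : chom C X Y), Fh X Y (cscale C a f) = cscale D a (Fh X Y f)),
      (forall X Y W (g : chom C Y W) (f : chom C X Y),
          Fh X W (ccomp C g f) = ccomp D (Fh Y W g) (Fh X Y f)),
      (forall X, Fh X X (cid C X) = cid D (F X))
    & (forall X Y, bijective (Fh X Y))] /\
    (forall Y : cobj D, exists X (u : chom D (F X) Y) (v : chom D Y (F X)),
          ccomp D u v = cid D Y /\ ccomp D v u = cid D (F X)).

(* A group acting: only its carrier, multiplication and unit are used. *)
Record grpdata := GrpData {
  gcar : choiceType;
  gmul : gcar -> gcar -> gcar;
  gone : gcar }.

Definition grpdata_of (G : groupType) : grpdata :=
  @GrpData G (fun g h => (g * h)%g) 1%g.

Record gset (G : groupType) := GSet {
  gpt : Type;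
  gact : G -> gpt -> gpt;
  gact1 : forall z, gact 1%g z = z;
  gactM : forall g h z, gact (g * h)%g z = gact g (gact h z) }.
Arguments gact {G} _.

Record lcaction (R : comPzRingType) (H : grpdata) (C : lincat R) := LCAction {
  aobj : gcar H -> lobj C -> lobj C;
  ahom : forall h X Y, lhom C X Y -> lhom C (aobj h X) (aobj h Y);
  aobj1 : forall X, aobj (gone H) X = X;
  aobjM : forall g h X, aobj (gmul g h) X = aobj g (aobj h X) }.
Arguments aobj {R H C} _.
Arguments ahom {R H C} _ h {X Y}.

Definition is_lcaction (R : comPzRingType) (H : grpdata) (C : lincat R)
  (a : lcaction H C) : Prop :=
  [/\ (forall h X Y (f g : lhom C X Y), ahom a h (f + g) = ahom a h f + ahom a h g),
      (forall h X Y (r : R) (f : lhom C X Y), ahom a h (r *: f) = r *: ahom a h f),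
      (forall h X Y W (g : lhom C Y W) (f : lhom C X Y),
          ahom a h (lcomp C g f) = lcomp C (ahom a h g) (ahom a h f))
    & (forall h X, ahom a h (idm C X) = idm C (aobj a h X))] /\
  (forall X Y (f : lhom C X Y),
          hcast (fun U V => (lhom C U V : Type)) (aobj1 a X) (aobj1 a Y) (ahom a (gone H) f) = f) /\
  (forall g h X Y (f : lhom C X Y),
          hcast (fun U V => (lhom C U V : Type)) (aobjM a g h X) (aobjM a g h Y) (ahom a (gmul g h) f)
          = ahom a g (ahom a h f)).

Section Crossed.
Variables (R : comPzRingType) (H : grpdata) (C : lincat R) (a : lcaction H C).
Local Open Scope classical_set_scope.

(* Morphisms X -> Y: finite formal sums  sum_h f_h h  with
   f_h : alpha_h(X) -> Y, i.e. finitely supported families. *)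
Definition cphom (X Y : lobj C) :=
  {f : forall h : gcar H, lhom C (aobj a h X) Y | finite_set [set h | f h != 0]}.

Lemma cp_zero_fin (X Y : lobj C) :
  finite_set [set h | (fun h : gcar H => (0 : lhom C (aobj a h X) Y)) h != 0].
Proof.
suff -> : [set h | (fun h : gcar H => (0 : lhom C (aobj a h X) Y)) h != 0] = set0.
  exact: finite_set0.
by apply/seteqP; split => h //=; rewrite eqxx.
Qed.

Definition cp_zero (X Y : lobj C) : cphom X Y :=
  exist _ (fun h => 0) (cp_zero_fin X Y).

(* packaging a family (all families built below are finitely supported) *)
Definition mkcp (X Y : lobj C) (f : forall h : gcar H, lhom C (aobj a h X) Y)
  : cphom X Y :=
  match pselect (finite_set [set h | f h != 0]) with
  | left p => exist _ f p
  | right _ => cp_zero X Y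
  end.

Definition cp_add X Y (f g : cphom X Y) : cphom X Y :=
  mkcp (fun h => proj1_sig f h + proj1_sig g h).

Definition cp_scale X Y (r : R) (f : cphom X Y) : cphom X Y :=
  mkcp (fun h => r *: proj1_sig f h).

(* identity = id_X . 1 *)
Definition cp_id X : cphom X X :=
  mkcp (fun h => match pselect (h = gone H) with
                 | left e => scast (fun U V => (lhom C U V : Type))
                     (esym (etrans (f_equal (fun k => aobj a k X) e) (aobj1 a X)))
                     (idm C X)
                 | right _ => 0 end).

(* composition, determined by (g k).(f h) = (g . alpha_k(f)) (k h) *)
Definition cp_term X Y W (g : cphom Y W) (f : cphom X Y) (m : gcar H)
  (p : gcar H * gcar H) : lhom C (aobj a m X) W :=
  match pselect (gmul p.1 p.2 = m) with
  | left e => scast (fun U V => (lhom C U V : Type))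
      (etrans (esym (aobjM a p.1 p.2 X)) (f_equal (fun k => aobj a k X) e))
      (lcomp C (proj1_sig g p.1) (ahom a p.1 (proj1_sig f p.2)))
  | right _ => 0 end.

Definition cp_comp X Y W (g : cphom Y W) (f : cphom X Y) : cphom X W :=
  mkcp (fun m => \sum_(p \in [set: gcar H * gcar H]) cp_term g f m p).

Definition crossed : lcat R :=
  @LCat R (lobj C) cphom cp_zero cp_add cp_scale cp_comp cp_id.

End Crossed.

Section Coprod.
Variables (R : comPzRingType) (I : Type) (C : I -> lcat R).

Definition tr (i j : I) (e : i = j) (X : cobj (C i)) : cobj (C j) :=
  match e in _ = k return cobj (C k) with erefl => X end.

Definition trhom (j k : I) (e : j = k) (X Y : cobj (C j))
  (f : chom (C j) X Y) : chom (C k) (tr e X) (tr e Y) :=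
  match e in _ = k' return chom (C k') (tr e X) (tr e Y) with
  | erefl => f end.

Lemma tr_id (i : I) (e : i = i) (X : cobj (C i)) : X = tr e X.
Proof. by rewrite (Prop_irrelevance e erefl). Qed.

Lemma tr_trans (i j k : I) (e1 : i = j) (e2 : j = k) (e : i = k)
  (X : cobj (C i)) : tr e2 (tr e1 X) = tr e X.
Proof.
subst j k; by rewrite (Prop_irrelevance e erefl).
Qed.

Definition cobj_sum := {i : I & cobj (C i)}.

(* no nonzero morphisms between objects of different summands *)
Definition chom_sum (A B : cobj_sum) :=
  forall e : projT1 A = projT1 B, chom (C (projT1 B)) (tr e (projT2 A)) (projT2 B).

Definition cs_zero A B : chom_sum A B := fun e => czero _.
Definition cs_add A B (f g : chom_sum A B) : chom_sum A B :=
  fun e => cadd _ (f e) (g e).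
Definition cs_scale A B (r : R) (f : chom_sum A B) : chom_sum A B :=
  fun e => cscale _ r (f e).
Definition cs_id A : chom_sum A A :=
  fun e => scast (chom (C (projT1 A))) (tr_id e (projT2 A)) (cid _ (projT2 A)).
Definition cs_comp A B D (g : chom_sum B D) (f : chom_sum A B) : chom_sum A D :=
  fun e => match pselect (projT1 A = projT1 B) with
  | left e1 =>
      let e2 := etrans (esym e1) e in
      scast (chom (C (projT1 D))) (tr_trans e1 e2 e (projT2 A))
        (ccomp _ (g e2) (trhom e2 (f e1)))
  | right _ => czero _ end.

Definition coprod : lcat R :=
  @LCat R cobj_sum chom_sum cs_zero cs_add cs_scale cs_comp cs_id.

End Coprod.

Definition fullsub (R : comPzRingType) (C : lincat R) (P : lobj C -> Prop)
  : lincat R :=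
  @LinCat R {X : lobj C | P X} (fun X Y => lhom C (proj1_sig X) (proj1_sig Y))
    (fun X Y W g f => lcomp C g f) (fun X => idm C (proj1_sig X)).

Section Stab.
Variables (G : groupType) (Z : gset G) (z : gpt Z).

Definition stabT := {g : G | gact Z g z = z}.
HB.instance Definition _ := gen_eqMixin stabT.
HB.instance Definition _ := gen_choiceMixin stabT.

Lemma stab_mul_proof (g h : stabT) :
  gact Z (proj1_sig g * proj1_sig h)%g z = z.
Proof. by rewrite gactM (proj2_sig h) (proj2_sig g). Qed.

Definition stab : grpdata :=
  @GrpData stabT (fun g h => exist _ _ (stab_mul_proof g h))
    (exist _ 1%g (gact1 z)).
End Stab.
Arguments stab {G} Z z.

Section Restrict.
Variables (R : comPzRingType) (G : groupType) (Z : gset G) (A : lincat R)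
  (a : lcaction (grpdata_of G) A) (deg : lobj A -> gpt Z)
  (hdeg : forall g X, deg (aobj a g X) = gact Z g (deg X)) (z : gpt Z).

Definition summand : lincat R := fullsub (fun X : lobj A => deg X = z).

Definition raobj (h : gcar (stab Z z)) (X : lobj summand) : lobj summand :=
  exist _ (aobj a (proj1_sig h) (proj1_sig X))
    (etrans (hdeg (proj1_sig h) (proj1_sig X))
       (etrans (f_equal (gact Z (proj1_sig h)) (proj2_sig X)) (proj2_sig h))).

Definition rahom (h : gcar (stab Z z)) (X Y : lobj summand)
  (f : lhom summand X Y) : lhom summand (raobj h X) (raobj h Y) :=
  ahom a (proj1_sig h) f.

Lemma raobj1 X : raobj (gone (stab Z z)) X = X.
Proof. by apply: sig_Prop_eq; rewrite /= (aobj1 a). Qed.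

Lemma raobjM g h X : raobj (gmul g h) X = raobj g (raobj h X).
Proof. by apply: sig_Prop_eq; rewrite /= (aobjM a). Qed.

Definition restr_action : lcaction (stab Z z) summand :=
  @LCAction R (stab Z z) summand raobj rahom raobj1 raobjM.
End Restrict.

(* Main.v *)
Require Import Defs.
From HB Require Import structures.
From mathcomp Require Import all_boot all_order all_algebra.
From mathcomp Require Import boolp classical_sets cardinality fsbigop.
Set Implicit Arguments.
Unset Strict Implicit.
Unset Printing Implicit Defensive.
Import GRing.Theory.
Local Open Scope ring_scope.
Local Open Scope classical_set_scope.

Lemma dup0 (V : zmodType) (x : V) : x = x + x -> x = 0.
Proof. by move/(congr1 (fun y => y - x)); rewrite subrr addrK. Qed.

Section Pack.
Variables (R : comPzRingType) (C : lincat R).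

Definition pk (X Y : lobj C) (f : lhom C X Y) :
  {XY : lobj C * lobj C & lhom C XY.1 XY.2} := existT _ (X, Y) f.

Lemma pk_inj X Y (f f' : lhom C X Y) : pk f = pk f' -> f = f'.
Proof.
move=> h; have := projT2_eq h.
by rewrite (Prop_irrelevance (projT1_eq h) erefl).
Qed.

Lemma pk_hcast X X' Y Y' (e1 : X = X') (e2 : Y = Y') (f : lhom C X Y) :
  pk (hcast (fun U V => (lhom C U V : Type)) e1 e2 f) = pk f.
Proof. by case: X' / e1; case: Y' / e2. Qed.

Lemma pk_scast X X' Y (e1 : X = X') (f : lhom C X Y) :
  pk (scast (fun U V => (lhom C U V : Type)) e1 f) = pk f.
Proof. by case: X' / e1. Qed.

Lemma pk_comp X Y W X' Y' W' (g : lhom C Y W) (f : lhom C X Y)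
  (g' : lhom C Y' W') (f' : lhom C X' Y') :
  pk g = pk g' -> pk f = pk f' -> pk (lcomp C g f) = pk (lcomp C g' f').
Proof.
move=> hg hf.
have := congr1 (@projT1 _ _) hg; case=> eY eW; subst Y' W'.
have := congr1 (@projT1 _ _) hf; case=> eX; subst X'.
by rewrite (pk_inj hg) (pk_inj hf).
Qed.

Lemma pk_idm X X' : X = X' -> pk (idm C X) = pk (idm C X').
Proof. by move=> ->. Qed.

Lemma pk_zero X Y X' Y' : X = X' -> Y = Y' ->
  pk (0 : lhom C X Y) = pk (0 : lhom C X' Y').
Proof. by move=> -> ->. Qed.

Lemma pk_eq X Y X' Y' (f : lhom C X Y) (f' : lhom C X' Y') :
  pk f = pk f' -> X = X' /\ Y = Y'.
Proof. by move=> h; have := congr1 (@projT1 _ _) h; case=> -> ->. Qed.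

Lemma pk_add X Y X' Y' (f g : lhom C X Y) (f' g' : lhom C X' Y') :
  pk f = pk f' -> pk g = pk g' -> pk (f + g) = pk (f' + g').
Proof.
move=> hf hg; have [eX eY] := pk_eq hf; subst X' Y'.
by rewrite (pk_inj hf) (pk_inj hg).
Qed.

Lemma pk_scale X Y X' Y' (r : R) (f : lhom C X Y) (f' : lhom C X' Y') :
  pk f = pk f' -> pk (r *: f) = pk (r *: f').
Proof.
move=> hf; have [eX eY] := pk_eq hf; subst X' Y'.
by rewrite (pk_inj hf).
Qed.

Hypothesis hC : is_lincat C.

Lemma comp0f X Y W (f : lhom C X Y) : lcomp C (0 : lhom C Y W) f = 0.
Proof. case: hC => h1 _ _ _ _; apply: dup0; by rewrite -h1 addr0. Qed.

Lemma compf0 X Y W (g : lhom C Y W) : lcomp C g (0 : lhom C X Y) = 0.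
Proof. case: hC => _ h1 _ _ _; apply: dup0; by rewrite -h1 addr0. Qed.

End Pack.

Section Act.
Variables (R : comPzRingType) (H : grpdata) (C : lincat R) (a : lcaction H C).
Hypothesis ha : is_lcaction a.

Lemma ahom0 h X Y : ahom a h (0 : lhom C X Y) = 0.
Proof. case: ha => [[h1 _ _ _] _]; apply: dup0; by rewrite -h1 addr0. Qed.

Lemma pk_act h X Y X' Y' (f : lhom C X Y) (f' : lhom C X' Y') :
  pk f = pk f' -> pk (ahom a h f) = pk (ahom a h f').
Proof.
move=> hf; have [eX eY] := pk_eq hf; subst X' Y'.
by rewrite (pk_inj hf).
Qed.

Lemma pk_actg h h' X Y (f : lhom C X Y) :
  h = h' -> pk (ahom a h f) = pk (ahom a h' f).
Proof. by move=> ->. Qed.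

Lemma pk_act1 X Y (f : lhom C X Y) : pk (ahom a (gone H) f) = pk f.
Proof.
case: ha => _ [h1 _]; by rewrite -{2}(h1 _ _ f) pk_hcast.
Qed.

Lemma pk_actM g h X Y (f : lhom C X Y) :
  pk (ahom a (gmul g h) f) = pk (ahom a g (ahom a h f)).
Proof.
case: ha => _ [_ h1]; by rewrite -(h1 _ _ _ _ f) pk_hcast.
Qed.

Lemma pk_fam (O : gcar H -> lobj C) Y (F : forall h, lhom C (O h) Y) h h' :
  h = h' -> pk (F h) = pk (F h').
Proof. by move=> ->. Qed.

End Act.

Set Implicit Arguments.
Unset Strict Implicit.
Unset Printing Implicit Defensive.
Import GRing.Theory.
Local Open Scope ring_scope.
Local Open Scope classical_set_scope.

Lemma fsbig_morph (T : choiceType) (U V : zmodType) (phi : U -> V) (P : set T)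
  (F : T -> U) : phi 0 = 0 -> {morph phi : x y / x + y} ->
  finite_set (P `&` F @^-1` [set~ 0]) ->
  phi (\sum_(i \in P) F i) = \sum_(i \in P) phi (F i).
Proof.
move=> h0 hD fin.
have rP : forall i, i \in finite_support 0 P F -> P i.
  by move=> i; rewrite (in_finite_support fin) => /set_mem [].
have c1 : forall i, P i -> i \notin finite_support 0 P F -> phi (F i) = 0.
  move=> i Pi; rewrite (in_finite_support fin) => /negP ni.
  have -> : F i = 0 by apply: contrapT => nz; apply: ni; apply: mem_set; split.
  exact: h0.
have c2 : [set` finite_support 0 P F] `<=` P by move=> i /= /rP.
rewrite [RHS](fsbigE (finite_support 0 P F) _ _ c2 c1) //.
rewrite (big_morph phi hD h0) [RHS]big_seq_cond big_seq.
apply: eq_bigl => i; case: (boolP (i \in _)) => //= /rP Pi.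
by rewrite mem_set.
Qed.

Section CP.
Variables (R : comPzRingType) (H : grpdata) (C : lincat R) (a : lcaction H C).
Hypothesis hz1 : forall X Y W (f : lhom C X Y), lcomp C (0 : lhom C Y W) f = 0.
Hypothesis hz2 : forall X Y W (g : lhom C Y W), lcomp C g (0 : lhom C X Y) = 0.
Hypothesis hz3 : forall h X Y, ahom a h (0 : lhom C X Y) = 0.

Lemma mkcpE X Y (f : forall h, lhom C (aobj a h X) Y) :
  finite_set [set h | f h != 0] -> proj1_sig (@mkcp _ _ _ a _ _ f) = f.
Proof. by move=> fin; rewrite /mkcp; case: pselect. Qed.

Lemma cphom_eq X Y (f g : cphom a X Y) :
  (forall h, proj1_sig f h = proj1_sig g h) -> f = g.
Proof.
move=> h; apply: sig_Prop_eq; exact: functional_extensionality_dep.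
Qed.

Lemma cp_addE X Y (f g : cphom a X Y) h :
  proj1_sig (cp_add f g) h = proj1_sig f h + proj1_sig g h.
Proof.
rewrite /cp_add mkcpE //.
apply: (sub_finite_set (B := [set h | proj1_sig f h != 0] `|` [set h | proj1_sig g h != 0])).
  move=> k /=; case: (eqVneq (proj1_sig f k) 0) => [->|]; last by left.
  by rewrite add0r => ?; right.
by rewrite finite_setU; split; [exact: (proj2_sig f)|exact: (proj2_sig g)].
Qed.

Lemma cp_scaleE X Y r (f : cphom a X Y) h :
  proj1_sig (cp_scale r f) h = r *: proj1_sig f h.
Proof.
rewrite /cp_scale mkcpE //.
apply: (sub_finite_set (B := [set h | proj1_sig f h != 0])); last exact: (proj2_sig f).
by move=> k /=; apply: contraNN => /eqP ->; rewrite scaler0.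
Qed.

Lemma cp_zeroE X Y h : proj1_sig (cp_zero a X Y) h = 0.
Proof. by []. Qed.

Lemma cp_term0 X Y W (g : cphom a Y W) (f : cphom a X Y) m p :
  cp_term g f m p != 0 ->
  [/\ gmul p.1 p.2 = m, proj1_sig g p.1 != 0 & proj1_sig f p.2 != 0].
Proof.
rewrite /cp_term; case: pselect => [e|]; last by rewrite eqxx.
case: (eqVneq (proj1_sig g p.1) 0) => [->|g0].
  by rewrite hz1 /scast; case: _ / (etrans _ _); rewrite eqxx.
case: (eqVneq (proj1_sig f p.2) 0) => [->|f0].
  by rewrite hz3 hz2; case: _ / (etrans _ _); rewrite eqxx.
by [].
Qed.

Lemma cp_compE X Y W (g : cphom a Y W) (f : cphom a X Y) m :
  proj1_sig (cp_comp g f) m = \sum_(p \in [set: gcar H * gcar H]) cp_term g f m p.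
Proof.
rewrite /cp_comp mkcpE //.
pose Sg := [set h | proj1_sig g h != 0]; pose Sf := [set h | proj1_sig f h != 0].
apply: (sub_finite_set (B := [set gmul p.1 p.2 | p in Sg `*` Sf])); last first.
  apply: finite_image; apply: finite_setX; [exact: (proj2_sig g)|exact: (proj2_sig f)].
move=> k /= hk.
case: (pselect (exists p, cp_term g f k p != 0)) => [[p /cp_term0 [e g0 f0]]|np].
  by exists p => //.
exfalso; move: hk => /=; rewrite fsbig1 ?eqxx //.
move=> p _; apply/eqP; apply: contrapT => hp; apply: np; exists p.
exact/negP.

Qed.

End CP.

Section CP2.
Variables (R : comPzRingType) (H : grpdata) (C : lincat R) (a : lcaction H C).
Hypothesis hz1 : forall X Y W (f : lhom C X Y), lcomp C (0 : lhom C Y W) f = 0.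
Hypothesis hz2 : forall X Y W (g : lhom C Y W), lcomp C g (0 : lhom C X Y) = 0.
Hypothesis hz3 : forall h X Y, ahom a h (0 : lhom C X Y) = 0.

Lemma cp_id1 X : pk (proj1_sig (cp_id a X) (gone H)) = pk (idm C X).
Proof.
rewrite /cp_id mkcpE.
  by case: pselect => // e; rewrite pk_scast.
apply: (sub_finite_set (B := [set gone H])); last exact: finite_set1.
by move=> h /=; case: pselect => // _; rewrite eqxx.
Qed.

Lemma cp_idN X h : h <> gone H -> proj1_sig (cp_id a X) h = 0.
Proof.
move=> nh; rewrite /cp_id mkcpE.
  by case: pselect.
apply: (sub_finite_set (B := [set gone H])); last exact: finite_set1.
by move=> k /=; case: pselect => // _; rewrite eqxx.
Qed.

Lemma cp_comp_mono X Y W (g : cphom a Y W) (f : cphom a X Y) s t m :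
  (forall h, h <> s -> proj1_sig g h = 0) ->
  (forall h, h <> t -> proj1_sig f h = 0) ->
  proj1_sig (cp_comp g f) m = cp_term g f m (s, t).
Proof.
move=> gs ft; rewrite cp_compE //.
rewrite -(fsbig_widen [set (s, t)] [set: gcar H * gcar H]) ?fsbig_set1 //.
move=> [p1 p2] [_ /= np]; apply/eqP; apply: contrapT => /negP/(cp_term0 hz1 hz2 hz3) [_ g0 f0].
apply: np; congr pair.
  by apply: contrapT => ne; move: g0; rewrite gs ?eqxx.
by apply: contrapT => ne; move: f0; rewrite ft ?eqxx.
Qed.

End CP2.

Set Implicit Arguments.
Unset Strict Implicit.
Unset Printing Implicit Defensive.
Import GRing.Theory.
Local Open Scope ring_scope.
Local Open Scope classical_set_scope.

Section Main.
Variables (R : comPzRingType) (G : groupType) (Z : gset G)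
  (A : lincat R) (a : lcaction (grpdata_of G) A) (deg : lobj A -> gpt Z).
Hypotheses (hA : is_lincat A) (ha : is_lcaction a)
  (hsum : forall (X Y : lobj A) (f : lhom A X Y), deg X <> deg Y -> f = 0)
  (hdeg : forall (g : G) (X : lobj A), deg (aobj a g X) = gact Z g (deg X)).
Variables (reps : gpt Z -> Prop).
Hypothesis (hreps : forall z : gpt Z, exists! r, reps r /\ exists g : G, gact Z g z = r).

Local Notation I := {r : gpt Z | reps r}.
Local Notation ob g X := (aobj a (g : G) X).
Local Notation act g f := (ahom a (g : G) f).
Local Notation Hom X Y := (lhom A X Y).
Local Notation CC := (fun r : I => crossed (restr_action hdeg (proj1_sig r))).
Local Notation D := (coprod CC).
Local Notation HC := (fun U V => (lhom A U V : Type)).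

Definition pickT (X : lobj A) := {p : I * G | gact Z p.2 (deg X) = sval p.1}.

Lemma pick_ex X : exists p : I * G, gact Z p.2 (deg X) = sval p.1.
Proof.
have [r [[hr [g hg]] _]] := hreps (deg X).
by exists (exist _ r hr, g).
Qed.

Definition pick X : pickT X := cid (pick_ex X).

Lemma uniqI z (i j : I) g h : gact Z g z = sval i -> gact Z h z = sval j -> i = j.
Proof.
move=> hi hj; have [r [_ hu]] := hreps z.
apply: sig_Prop_eq; rewrite -(hu (sval i)) ?(hu (sval j)) //.
  by split; [exact: (proj2_sig j)| exists h].
by split; [exact: (proj2_sig i)| exists g].
Qed.

Lemma conj_inj (g h x y : G) : (g^-1 * x * h)%g = (g^-1 * y * h)%g -> x = y.
Proof. by rewrite -!mulgA => /mulgI /mulIg. Qed.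

Lemma conj_cancel (g h x : G) : (g^-1 * (g * x * h^-1) * h)%g = x.
Proof. by rewrite !mulgA mulVg mul1g -mulgA mulVg mulg1. Qed.

Lemma conj_mulE (g h l x y : G) :
  ((g^-1 * x * h) * (h^-1 * y * l))%g = (g^-1 * (x * y) * l)%g.
Proof. by rewrite !mulgA -(mulgA _ h) mulgV mulg1. Qed.

Lemma mulKV3 (g x h : G) : (g * (g^-1 * x * h))%g = (x * h)%g.
Proof. by rewrite !mulgA mulgV mul1g. Qed.

Lemma pfF X (p : pickT X) : deg (ob (sval p).2 X) = sval (sval p).1.
Proof. by rewrite hdeg (proj2_sig p). Qed.

Definition Fobj X (p : pickT X) : cobj D :=
  existT _ (sval p).1 (exist _ (ob (sval p).2 X) (pfF p)).

Lemma e1core (r : gpt Z) (X : lobj A) (gx gy : G) (U : {X | deg X = r}) (k : @stabT G Z r) :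
  sval U = ob gx X ->
  ob gy (ob (gy^-1 * sval k * gx)%g X) = ob (sval k) (sval U).
Proof.
move=> ->.
rewrite -(aobjM a gy) -(aobjM a (sval k)) /=.
by rewrite !mulgA mulgV mul1g.
Qed.

Definition core (r : gpt Z) X Y (gx gy : G) (f : cphom a X Y)
  (U V : {X | deg X = r}) (eU : sval U = ob gx X) (eV : sval V = ob gy Y) :
  cphom (restr_action hdeg r) U V :=
  mkcp (a := restr_action hdeg r) (X := U) (Y := V)
   (fun k : @stabT G Z r => hcast HC (e1core gy k eU) (esym eV)
      (act gy (proj1_sig f (gy^-1 * sval k * gx)%g))).

Lemma sval_tr (i j : I) (e : i = j) (U : cobj (CC i)) :
  sval (tr (C := CC) e U : {X | deg X = sval j}) = sval (U : {X | deg X = sval i}).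
Proof. by case: j / e. Qed.

Definition Fh X Y (px : pickT X) (py : pickT Y) (f : cphom a X Y) :
  chom D (Fobj px) (Fobj py) :=
  fun e => @core (sval (projT1 (Fobj py))) X Y (sval px).2 (sval py).2 f
    (tr e (projT2 (Fobj px))) (projT2 (Fobj py)) (sval_tr e (projT2 (Fobj px))) erefl.
Arguments Fh {X Y} px py f.


Lemma hcast0 X X' Y Y' (e1 : X = X') (e2 : Y = Y') :
  hcast HC e1 e2 (0 : Hom X Y) = 0.
Proof. by case: X' / e1; case: Y' / e2. Qed.

Lemma coreE (r : gpt Z) X Y (gx gy : G) (f : cphom a X Y)
  (U V : {X | deg X = r}) (eU : sval U = ob gx X) (eV : sval V = ob gy Y) k :
  proj1_sig (core f eU eV) k = hcast HC (e1core gy k eU) (esym eV)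
      (act gy (proj1_sig f (gy^-1 * sval k * gx)%g)).
Proof.
rewrite /core mkcpE //.
pose ff := (fun k : @stabT G Z r => (gy^-1 * sval k * gx)%g).
apply: (sub_finite_set (B := ff @^-1` [set h | proj1_sig f h != 0])).
  move=> k' /=; apply: contraNN => /eqP ->.
  by rewrite ahom0 // hcast0.
apply: finite_preimage; last exact: (proj2_sig f).
move=> k1 k2 _ _; rewrite /ff => /(congr1 (fun x => (gy * x * gx^-1)%g)).
rewrite !mulgA !mulgV !mul1g -!mulgA !mulgV !mulg1 => e.
exact: sig_Prop_eq.
Qed.

Lemma pk_core (r : gpt Z) X Y (gx gy : G) (f : cphom a X Y)
  (U V : {X | deg X = r}) (eU : sval U = ob gx X) (eV : sval V = ob gy Y) k :
  pk (proj1_sig (core f eU eV) k : Hom _ _) =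
  pk (act gy (proj1_sig f (gy^-1 * sval k * gx)%g)).
Proof. by rewrite coreE pk_hcast. Qed.

Lemma Fh_add X Y (px : pickT X) (py : pickT Y) (f g : cphom a X Y) :
  Fh px py (cp_add f g) = cadd D (Fh px py f) (Fh px py g).
Proof.
apply: functional_extensionality_dep => e; apply: cphom_eq => k.
rewrite cp_addE /Fh !coreE cp_addE; apply: (@pk_inj _ A); rewrite pk_hcast.
case: ha => [[h1 _ _ _] _]; rewrite h1.
by apply: pk_add; rewrite pk_hcast.
Qed.

Lemma Fh_scale X Y (px : pickT X) (py : pickT Y) r (f : cphom a X Y) :
  Fh px py (cp_scale r f) = cscale D r (Fh px py f).
Proof.
apply: functional_extensionality_dep => e; apply: cphom_eq => k.
rewrite cp_scaleE /Fh !coreE cp_scaleE; apply: (@pk_inj _ A); rewrite pk_hcast.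
case: ha => [[_ h1 _ _] _]; rewrite h1.
by apply: pk_scale; rewrite pk_hcast.
Qed.


Lemma pkS_A (r : gpt Z) (U V U' V' : {X | deg X = r})
  (f : lhom (summand deg r) U V) (f' : lhom (summand deg r) U' V') :
  pk f = pk f' -> @pk _ A (sval U) (sval V) f = @pk _ A (sval U') (sval V') f'.
Proof.
move=> h; have [eU eV] := pk_eq h; subst U' V'.
by rewrite (pk_inj h).
Qed.

Lemma scast_id (O : Type) (HH : O -> O -> Type) (U V : O) (e : U = U) (f : HH U V) :
  scast HH e f = f.
Proof. by rewrite (Prop_irrelevance e erefl). Qed.

Lemma Fh_id X (px : pickT X) : Fh px px (cp_id a X) = Defs.cid D (Fobj px).
Proof.
apply: functional_extensionality_dep => e.
move: e; rewrite /Fh /= => e; rewrite (Prop_irrelevance e erefl) /= /cs_id /=.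
rewrite scast_id; clear e; move: px => [[i gx] hx] /=.
apply: cphom_eq => k; rewrite coreE.
case: (pselect (k = gone (stab Z (sval i)))) => [->|nk].
  apply: (@pk_inj _ A); rewrite pk_hcast.
  rewrite (pkS_A (cp_id1 (restr_action hdeg (sval i)) _)) /=.
  case: ha => [[_ _ _ h1] _]; rewrite -h1; apply: pk_act.
  rewrite (@pk_fam _ (grpdata_of G) _ _ _ _ _ (gone (grpdata_of G))) ?cp_id1 //.
  by rewrite /= mulg1 mulVg.
rewrite (@cp_idN _ (grpdata_of G) _ a X); last first.
  move=> e1; apply: nk; apply: sig_Prop_eq => /=.
  move: e1 => /(congr1 (fun x => (gx * x * gx^-1)%g)) /=.
  by rewrite !mulgA mulgV mul1g mulg1 -mulgA mulgV mulg1.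
rewrite ahom0 // hcast0 cp_idN //.
Qed.


Lemma eq1G (X Y : lobj A) (W : lobj A) (gx gy h : G) :
  W = ob gx X -> ob (gy^-1)%g (ob (gy * h * gx^-1)%g W) = ob h X.
Proof.
move=> ->; rewrite -!(aobjM a) /=.
by rewrite !mulgA mulVg mul1g -mulgA mulVg mulg1.
Qed.

Lemma eq2G (Y : lobj A) (gy : G) : ob (gy^-1)%g (ob gy Y) = Y.
Proof.
by rewrite -(aobjM a) /= mulVg (aobj1 a).
Qed.

Definition Gfam (r : gpt Z) X Y (gx gy : G) (U V : {X | deg X = r})
  (eU : sval U = ob gx X) (eV : sval V = ob gy Y)
  (phi : cphom (restr_action hdeg r) U V) : forall h : G, Hom (ob h X) Y :=
  fun h => match pselect (gact Z (gy * h * gx^-1)%g r = r) with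
  | left s => hcast HC (eq1G Y gy h eU) (etrans (f_equal (aobj a (gy^-1)%g) eV) (eq2G Y gy))
       (act (gy^-1)%g (proj1_sig phi (exist _ (gy * h * gx^-1)%g s)))
  | right _ => 0 end.

Lemma Gfam_fin (r : gpt Z) X Y (gx gy : G) (U V : {X | deg X = r})
  (eU : sval U = ob gx X) (eV : sval V = ob gy Y)
  (phi : cphom (restr_action hdeg r) U V) :
  finite_set [set h | Gfam eU eV phi h != 0].
Proof.
pose ff := (fun h : G => (gy * h * gx^-1)%g).
apply: (sub_finite_set (B := ff @^-1` [set sval k | k in [set k | proj1_sig phi k != 0]])).
  move=> h /=; rewrite /Gfam; case: pselect => // s; last by rewrite eqxx.
  case: (eqVneq (proj1_sig phi (exist _ (gy * h * gx^-1)%g s)) 0) => [->|nz].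
    by rewrite ahom0 // hcast0 eqxx.
  by move=> _; exists (exist _ (gy * h * gx^-1)%g s).
apply: finite_preimage; last by apply: finite_image; exact: (proj2_sig phi).
move=> h1 h2 _ _; rewrite /ff => /(congr1 (fun x => (gy^-1 * x * gx)%g)).
by rewrite !mulgA !mulVg !mul1g -!mulgA !mulVg !mulg1.
Qed.

Definition Gh X Y (px : pickT X) (py : pickT Y) (phi : chom D (Fobj px) (Fobj py)) :
  cphom a X Y :=
  match pselect ((sval px).1 = (sval py).1) with
  | left e => @mkcp _ (grpdata_of G) A a X Y (Gfam (sval_tr e (projT2 (Fobj px))) (erefl (sval (projT2 (Fobj py)))) (phi e))
  | right _ => cp_zero a X Y end.
Arguments Gh {X Y} px py phi.


Lemma FhK X Y (px : pickT X) (py : pickT Y) : cancel (Fh px py) (Gh px py).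
Proof.
move=> f; rewrite /Gh; move: px py => [[i gx] hx] [[j gy] hy] /=.
case: pselect => /= [e|ne].
  subst j.
  apply: cphom_eq => h; rewrite mkcpE; last exact: Gfam_fin.
  rewrite /Gfam; case: pselect => [s|ns].
    apply: (@pk_inj _ A); rewrite pk_hcast /Fh coreE.
    rewrite (pk_act a _ (pk_hcast _ _ _)) -(pk_actM ha) /=.
    rewrite (@pk_actg _ _ _ a _ (gone (grpdata_of G))); last exact: mulVg.
    rewrite (pk_act1 ha).
    apply: pk_fam => /=.
    by rewrite !mulgA mulVg mul1g -mulgA mulVg mulg1.
  symmetry; apply: hsum => ed; apply: ns.
  move: hx hy => /= hx hy.
  apply: etrans hy; rewrite -{1}hx -gactM -ed hdeg -gactM.
  by rewrite -mulgA mulVg mulg1.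
apply: cphom_eq => h; rewrite cp_zeroE; symmetry; apply: hsum => ed; apply: ne.
move: hx hy => /= hx hy.
apply: (@uniqI (deg X) i j gx (gy * h)%g) => //.
by rewrite gactM -hdeg ed.
Qed.


Lemma pk_famS (r : gpt Z) (W V : lobj A)
  (F : forall k : @stabT G Z r, Hom (ob (sval k) W) V) k1 k2 :
  k1 = k2 -> pk (F k1) = pk (F k2).
Proof. by move=> ->. Qed.

Lemma GhK X Y (px : pickT X) (py : pickT Y) : cancel (Gh px py) (Fh px py).
Proof.
move: px py => [[i gx] hx] [[j gy] hy] phi.
apply: functional_extensionality_dep => e; move: phi; simpl in e; subst j => phi.
rewrite /Gh /=; case: pselect => [e'|ne]; last by exfalso; apply: ne.
rewrite (Prop_irrelevance e' erefl); clear e'.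
apply: cphom_eq => k; rewrite /Fh coreE mkcpE; last exact: Gfam_fin.
rewrite /Gfam; case: pselect => [s|ns]; last first.
  exfalso; apply: ns.
  rewrite !mulgA mulgV mul1g -mulgA mulgV mulg1.
  exact: (proj2_sig k).
apply: (@pk_inj _ A); rewrite pk_hcast.
rewrite (pk_act a _ (pk_hcast _ _ _)) -(pk_actM ha) /=.
rewrite (@pk_actg _ _ _ a _ (gone (grpdata_of G))); last exact: mulgV.
rewrite (pk_act1 ha).
have ek : exist (fun g : G => gact Z g (sval i) = sval i) (gy * (gy^-1 * sval k * gx) * gx^-1)%g s = k.
  by apply: sig_Prop_eq; rewrite /= !mulgA mulgV mul1g -mulgA mulgV mulg1.
exact: (@pk_famS _ _ _ (proj1_sig (phi erefl)) _ _ ek).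
Qed.


Lemma hz1A X Y W (f : Hom X Y) : lcomp A (0 : Hom Y W) f = 0.
Proof. exact: comp0f. Qed.
Lemma hz2A X Y W (g : Hom Y W) : lcomp A g (0 : Hom X Y) = 0.
Proof. exact: compf0. Qed.
Lemma hz3A h X Y : ahom a h (0 : Hom X Y) = 0.
Proof. exact: ahom0. Qed.

Lemma hz1S r X Y W (f : lhom (summand deg r) X Y) :
  lcomp (summand deg r) (0 : lhom (summand deg r) Y W) f = 0.
Proof. exact: (@comp0f _ A hA _ _ (sval W) f). Qed.
Lemma hz2S r X Y W (g : lhom (summand deg r) Y W) :
  lcomp (summand deg r) g (0 : lhom (summand deg r) X Y) = 0.
Proof. exact: (@compf0 _ A hA (sval X) _ _ g). Qed.
Lemma hz3S r h X Y :
  ahom (restr_action hdeg r) h (0 : lhom (summand deg r) X Y) = 0.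
Proof. exact: (@ahom0 _ _ _ a ha (sval h) (sval X) (sval Y)). Qed.

Lemma hcastD X X' Y Y' (e1 : X = X') (e2 : Y = Y') (f g : Hom X Y) :
  hcast HC e1 e2 (f + g) = hcast HC e1 e2 f + hcast HC e1 e2 g.
Proof. by case: X' / e1; case: Y' / e2. Qed.

Lemma hcast_act_sum (T : choiceType) (P : set T) (g : G) X Y X' Y'
  (e1 : ob g X = X') (e2 : ob g Y = Y') (F : T -> Hom X Y) :
  finite_set (P `&` F @^-1` [set~ 0]) ->
  hcast HC e1 e2 (act g (\sum_(p \in P) F p)) =
  \sum_(p \in P) hcast HC e1 e2 (act g (F p)).
Proof.
move=> fin; apply: (fsbig_morph (phi := fun x => hcast HC e1 e2 (act g x))) => //.
  by rewrite hz3A hcast0.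
move=> x y /=; case: ha => [[h1 _ _ _] _].
by rewrite h1 hcastD.
Qed.

Lemma pk_scastS r (U U' V : {X | deg X = r}) (e : U = U') (f : lhom (summand deg r) U V) :
  @pk _ A (sval U') (sval V) (scast (fun U V => (lhom (summand deg r) U V : Type)) e f)
  = @pk _ A (sval U) (sval V) f.
Proof. by case: U' / e. Qed.

Lemma Fh_comp X Y W (px : pickT X) (py : pickT Y) (pw : pickT W)
  (g : cphom a Y W) (f : cphom a X Y) :
  Fh px pw (cp_comp g f) = ccomp D (Fh py pw g) (Fh px py f).
Proof.
move: px py pw => [[i gx] hx] [[j gy] hy] [[l gw] hw].
apply: functional_extensionality_dep => e; simpl in e; subst l.
rewrite /ccomp /= /cs_comp /=.
case: pselect => /= [e1|ne].
  subst j; rewrite /= scast_id.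
  apply: cphom_eq => k; rewrite /Fh coreE (cp_compE hz1A hz2A hz3A).
  rewrite hcast_act_sum; last first.
    apply: (sub_finite_set (B := [set h | proj1_sig g h != 0] `*` [set h | proj1_sig f h != 0])).
      by move=> p [_ /= /eqP/(cp_term0 hz1A hz2A hz3A) [_ g0 f0]].
    by apply: finite_setX; [exact: (proj2_sig g)|exact: (proj2_sig f)].
  rewrite (cp_compE (@hz1S _) (@hz2S _) (@hz3S _)); cbn [proj1_sig fst snd].
  pose psi := fun q : (@stabT G Z (sval i)) * (@stabT G Z (sval i)) =>
    (((gw^-1 * sval q.1 * gy)%g, (gy^-1 * sval q.2 * gx)%g)
      : gcar (grpdata_of G) * gcar (grpdata_of G)).
  have psi_inj : {in [set: (@stabT G Z (sval i)) * (@stabT G Z (sval i))] &, injective psi}.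
    move=> [q1 q2] [q3 q4] _ _ [] /=.
    move=> /conj_inj /sig_Prop_eq -> /conj_inj /sig_Prop_eq -> //.
  rewrite -(fsbig_widen (psi @` setT) setT) //; last first.
    move=> p [_ np].

hnf; cbv beta.     case: (eqVneq (cp_term g f (gw^-1 * sval k * gx)%g p) 0) => [->|nz].
      by rewrite hz3A hcast0.
    exfalso; have [_ g0 f0] := cp_term0 hz1A hz2A hz3A nz.
    have d1 : deg (ob p.1 Y) = deg W.
      by apply: contrapT => nd; move: g0; rewrite (hsum (proj1_sig g p.1) nd) eqxx.
    have d2 : deg (ob p.2 X) = deg Y.
      by apply: contrapT => nd; move: f0; rewrite (hsum (proj1_sig f p.2) nd) eqxx.
    move: hx hy hw => /= hx hy hw.
    have s1 : gact Z (gw * p.1 * gy^-1)%g (sval i) = sval i.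
      rewrite -{1}hy -gactM -mulgA mulVg mulg1 gactM -hdeg d1 //.
    have s2 : gact Z (gy * p.2 * gx^-1)%g (sval i) = sval i.
      rewrite -{1}hx -gactM -mulgA mulVg mulg1 gactM -hdeg d2 //.
    apply: np; exists (exist (fun g : G => gact Z g (sval i) = sval i) _ s1, exist (fun g : G => gact Z g (sval i) = sval i) _ s2) => //.
    rewrite /psi /=; case: p {g0 f0 nz d1 d2 s1 s2} => p1 p2 /=.
    by congr (_, _); apply: conj_cancel.
  rewrite fsbig_image //.
  apply: eq_fsbigr => q _.
  rewrite /cp_term; case: pselect => [c1|n1]; case: pselect => [c2|n2].
  - apply: (@pk_inj _ A).
    rewrite pk_hcast (pk_act a _ (pk_scast _ _)).
    case: ha => [[_ _ h3 _] _]; rewrite h3.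
    rewrite pk_scastS.
    symmetry; apply: pk_comp.
      by rewrite pk_core.
    apply: etrans (pk_act a (sval q.1) (pk_core f _ _ q.2)) _.
    rewrite -!(pk_actM ha); apply: pk_actg.
    exact: (esym (mulKV3 gw (sval q.1) gy)).
  - exfalso; apply: n2; apply: sig_Prop_eq => /=.
    have E := conj_mulE gw gy gx (sval q.1) (sval q.2).
    apply: (conj_inj (g:=gw) (h:=gx)); rewrite -E; exact: c1.
  - exfalso; apply: n1.
    have c2' : (sval q.1 * sval q.2)%g = sval k := congr1 (@proj1_sig _ _) c2.
    apply: etrans (conj_mulE gw gy gx (sval q.1) (sval q.2)) _.
    by rewrite c2'.
  - by rewrite hz3A hcast0.
apply: cphom_eq => k; rewrite /Fh coreE (cp_compE hz1A hz2A hz3A) cp_zeroE.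
rewrite fsbig1 ?hz3A ?hcast0 //.
move=> p _; apply/eqP; apply: contrapT => /negP/(cp_term0 hz1A hz2A hz3A) [_ _ f0].
apply: ne; move: hx hy hw => /= hx hy hw.
have d2 : deg (ob p.2 X) = deg Y.
  by apply: contrapT => nd; move: f0; rewrite (hsum (proj1_sig f p.2) nd) eqxx.
apply: (@uniqI (deg X) i j gx (gy * p.2)%g) => //.
by rewrite gactM -hdeg d2.
Qed.


Definition mono (r : gpt Z) (U V : {X | deg X = r}) (s : @stabT G Z r)
  (phi : Hom (ob (sval s) (sval U)) (sval V)) : cphom (restr_action hdeg r) U V :=
  mkcp (a := restr_action hdeg r) (X := U) (Y := V)
   (fun k : @stabT G Z r => match pselect (k = s) with
    | left e => scast HC (f_equal (fun k : @stabT G Z r => ob (sval k) (sval U)) (esym e)) phi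
    | right _ => 0 end).

Lemma mono_fin (r : gpt Z) (U V : {X | deg X = r}) (s : @stabT G Z r)
  (phi : Hom (ob (sval s) (sval U)) (sval V)) :
  finite_set [set k | (fun k : @stabT G Z r => match pselect (k = s) with
    | left e => scast HC (f_equal (fun k : @stabT G Z r => ob (sval k) (sval U)) (esym e)) phi
    | right _ => 0 end) k != 0].
Proof.
apply: (sub_finite_set (B := [set s])); last exact: finite_set1.
by move=> k /=; case: pselect => // _; rewrite eqxx.
Qed.

Lemma mono_s (r : gpt Z) (U V : {X | deg X = r}) (s : @stabT G Z r)
  (phi : Hom (ob (sval s) (sval U)) (sval V)) :
  pk (proj1_sig (mono phi) s : Hom _ _) = pk phi.
Proof.
rewrite /mono mkcpE; last exact: mono_fin.
case: pselect => // e; exact: pk_scast.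
Qed.

Lemma mono_N (r : gpt Z) (U V : {X | deg X = r}) (s : @stabT G Z r)
  (phi : Hom (ob (sval s) (sval U)) (sval V)) k :
  k <> s -> proj1_sig (mono phi) k = 0.
Proof.
move=> nk; rewrite /mono mkcpE; last exact: mono_fin.
by case: pselect.
Qed.

Lemma cs_comp_const (i : I) (U1 U2 U3 : cobj (CC i))
  (g0 : chom (CC i) U2 U3) (f0 : chom (CC i) U1 U2) :
  ccomp D (X := existT _ i U1) (Y := existT _ i U2) (W := existT _ i U3)
    (fun e : i = i => scast (chom (CC i)) (tr_id e U2) g0)
    (fun e : i = i => scast (chom (CC i)) (tr_id e U1) f0)
  = fun e : i = i => scast (chom (CC i)) (tr_id e U1) (ccomp (CC i) g0 f0).
Proof.
apply: functional_extensionality_dep => e.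
rewrite /ccomp /= /cs_comp /=; case: pselect => [e1|ne]; last by exfalso; apply: ne.
rewrite (Prop_irrelevance e1 erefl) (Prop_irrelevance e erefl) /=.
by rewrite !scast_id.
Qed.


Lemma cp_termS (r : gpt Z) (U V W : {X | deg X = r})
  (g : cphom (restr_action hdeg r) V W) (f : cphom (restr_action hdeg r) U V) k p :
  gmul p.1 p.2 = k ->
  @pk _ A _ _ (cp_term g f k p : lhom (summand deg r) _ _) =
  @pk _ A _ _ (lcomp A (proj1_sig g p.1 : Hom _ _) (act (sval p.1) (proj1_sig f p.2 : Hom _ _))).
Proof.
move=> c; rewrite /cp_term; case: pselect => // c'.
exact: pk_scastS.
Qed.

Lemma ess (i : I) (U : cobj (CC i)) (px : pickT (sval (U : {X | deg X = sval i}))) :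
  exists (u : chom D (Fobj px) (existT _ i U)) (v : chom D (existT _ i U) (Fobj px)),
    ccomp D u v = Defs.cid D (existT _ i U) /\ ccomp D v u = Defs.cid D (Fobj px).
Proof.
move: px => [[j gx] hx] /=; move: hx => /= hx.
have eij : i = j.
  apply: (@uniqI (deg (sval (U : {X | deg X = sval i}))) i j 1%g gx) => //.
  by rewrite gact1 (proj2_sig U).
subst j.
have sx : gact Z gx (sval i) = sval i by rewrite -{1}(proj2_sig U) hx.
have sxi : gact Z (gx^-1)%g (sval i) = sval i by rewrite -{1}sx -gactM mulVg gact1.
pose s := exist (fun g : G => gact Z g (sval i) = sval i) gx sx.
pose si := exist (fun g : G => gact Z g (sval i) = sval i) (gx^-1)%g sxi.
pose Ux : {X | deg X = sval i} := exist _ (ob gx (sval (U : {X | deg X = sval i})))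
  (pfF (exist (fun p : I * G => gact Z p.2 (deg (sval (U : {X | deg X = sval i}))) = sval p.1) (i, gx) hx)).
pose u0 := @mono (sval i) Ux U si
  (scast HC (esym (eq2G (sval (U : {X | deg X = sval i})) gx)) (idm A (sval (U : {X | deg X = sval i})))).
pose v0 := @mono (sval i) U Ux s (idm A (ob gx (sval (U : {X | deg X = sval i})))).
exists (fun e => scast (chom (CC i)) (@tr_id _ _ CC i e Ux) u0).
exists (fun e => scast (chom (CC i)) (@tr_id _ _ CC i e U) v0).
have H1 : ccomp (CC i) u0 v0 = Defs.cid (CC i) U.
  apply: cphom_eq => k.
  rewrite /= (cp_comp_mono (@hz1S _) (@hz2S _) (@hz3S _) (s := si) (t := s)); last first.
  - by move=> h; apply: mono_N.
  - by move=> h; apply: mono_N.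
  case: (pselect (k = gone (stab Z (sval i)))) => [->|nk].
    have c : @gmul (stab Z (sval i)) si s = gone (stab Z (sval i)).
      by apply: sig_Prop_eq => /=; rewrite mulVg.
    apply: (@pk_inj _ A); apply: etrans (@cp_termS _ _ _ _ u0 v0 _ (si, s) c) _.
    rewrite (pkS_A (cp_id1 (restr_action hdeg (sval i)) _)).
    apply: etrans (pk_comp (mono_s _) (pk_act a (sval si) (mono_s _))) _.
    case: hA => _ _ _ _ hid; case: ha => [[_ _ _ h4] _].
    by rewrite h4 (hid _ _ _).2 pk_scast.
  rewrite (@cp_idN _ _ _ (restr_action hdeg (sval i)) _ k nk) /cp_term; case: pselect => // c.
  by exfalso; apply: nk; rewrite -c; apply: sig_Prop_eq => /=; rewrite mulVg.
have H2 : ccomp (CC i) v0 u0 = Defs.cid (CC i) Ux.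
  apply: cphom_eq => k.
  rewrite /= (@cp_comp_mono _ _ _ _ (@hz1S _) (@hz2S _) (@hz3S _) _ _ _ v0 u0 s si); last first.
  - by move=> h; apply: mono_N.
  - by move=> h; apply: mono_N.
  case: (pselect (k = gone (stab Z (sval i)))) => [->|nk].
    have c : @gmul (stab Z (sval i)) s si = gone (stab Z (sval i)).
      by apply: sig_Prop_eq => /=; rewrite mulgV.
    apply: (@pk_inj _ A); apply: etrans (@cp_termS _ _ _ _ v0 u0 _ (s, si) c) _.
    apply: etrans _ (esym (pkS_A (cp_id1 (restr_action hdeg (sval i)) Ux))).
    apply: etrans (pk_comp (mono_s _) (pk_act a (sval s) (mono_s _))) _.
    case: hA => _ _ _ _ hid; case: ha => [[_ _ _ h4] _].
    rewrite (hid _ _ _).1 (pk_act a _ (pk_scast _ _)) h4.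
    by apply: pk_idm.
  rewrite (@cp_idN _ _ _ (restr_action hdeg (sval i)) Ux k nk) /cp_term; case: pselect => // c.
  by exfalso; apply: nk; rewrite -c; apply: sig_Prop_eq => /=; rewrite mulgV.
split.
  by apply: etrans (cs_comp_const _ _) _; rewrite H1.
by apply: etrans (cs_comp_const _ _) _; rewrite H2.
Qed.


Lemma main_equiv : lcat_equiv (crossed a) D.
Proof.
exists (fun X => Fobj (pick X)), (fun X Y => Fh (pick X) (pick Y)).
split; first split.
- move=> X Y f g; exact: Fh_add.
- move=> X Y r f; exact: Fh_scale.
- move=> X Y W g f; exact: Fh_comp.
- move=> X; exact: Fh_id.
- move=> X Y; exists (Gh (pick X) (pick Y)); [exact: FhK | exact: GhK].
move=> [i U]; exists (sval (U : {X | deg X = sval i})).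
exact: ess.
Qed.

End Main.

Unset Implicit Arguments.

Theorem lemma4p5 (R : comPzRingType) (G : groupType) (Z : gset G)
  (A : lincat R) (a : lcaction (grpdata_of G) A) (deg : lobj A -> gpt Z)
  (hA : is_lincat A) (ha : is_lcaction a)
  (hsum : forall (X Y : lobj A) (f : lhom A X Y), deg X <> deg Y -> f = 0)
  (hdeg : forall (g : G) (X : lobj A), deg (aobj a g X) = gact Z g (deg X))
  (reps : gpt Z -> Prop)
  (hreps : forall z : gpt Z, exists! r, reps r /\ exists g : G, gact Z g z = r) :
  lcat_equiv (crossed a)
    (coprod (fun r : {r : gpt Z | reps r} =>
               crossed (restr_action hdeg (proj1_sig r)))).
Proof. exact: main_equiv. Qed.
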